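(* Let $p$ be a prime, $k$ a commutative $\mathbb{Z}_{(p)}$-algebra, $n\in\mathbb{N}$, and $(a,I)\in\mathcal P$ with $a$ taking values in $\mathbb{N}$. Let $P$ be the set of partitions of $a$ (subsets of $\mathrm{Supp}(a)$) of size $\#I$. Then there exists a function $s\colon P\to\mathbb{Z}$ such that in $W\Omega_{k[X_1,\ldots,X_n]/k}$ $$h(a,I)=\sum_{J\in P}e(s(J),a,J),$$ where $s(J)$ is viewed in $W(k)$ via $\mathbb{Z}\to W(k)$.
   Context: $W\Omega_{k[\underline X]/k}$ is the (Langer–Zink) de Rham–Witt complex of $k[X_1,\ldots,X_n]$ over $k$ with differential $d$, Frobenius $F$, Teichmüller map $[\cdot]$. A weight function is a map $a\colon\{1,\ldots,n\}\to\mathbb{N}[1/p]$; $\mathrm{Supp}(a)=\{i:a_i\neq0\}$; $a|_K$ equals $a$ on $K$ and $0$ elsewhere; $\mathrm{val}_p$ is the $p$-adic valuation, $\mathrm{val}_p(a)=\min_{i\in\mathrm{Supp}(a)}\mathrm{val}_p(a_i)$. A partition of $a$ is a subset of $\mathrm{Supp}(a)$, its size is its cardinality; $\mathcal P$ is the set of pairs $(a,I)$. Order $\mathrm{Supp}(a)$ by $i\preceq i'$ iff $\mathrm{val}_p(a_i)<\mathrm{val}_p(a_{i'})$, or equality and $i\leqslant i'$. For $J=\{j_1\prec\cdots\prec j_m\}$: $J_0=\{i: i\prec j_1\}$ ($=\mathrm{Supp}(a)$ if $m=0$), $J_l=\{i: j_l\preceq i\prec j_{l+1}\}$ ($1\leqslant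 l<m$), $J_m=\{i: j_m\preceq i\}$. For $\mathbb{N}$-valued nonzero $c$, $g(c)=F^{\mathrm{val}_p(c)}\big(d([\underline X^{p^{-\mathrm{val}_p(c)}c}])\big)$, $\underline X^c=\prod X_i^{c_i}$. For $\mathbb{N}$-valued $a$ and $\eta\in W(k)$: $e(\eta,a,J)=\eta\,[\underline X^{a|_{J_0}}]\prod_{l=1}^m g(a|_{J_l})$ (product in increasing $l$). Also $h(a,I)=\prod_{i\in\mathrm{Supp}(a)\smallsetminus I}[X_i]^{a_i}\prod_{j\in I}F^{\mathrm{val}_p(a_j)}\big(d([X_j]^{p^{-\mathrm{val}_p(a_j)}a_j})\big)$, the second product taken in a fixed order (e.g. increasing $j$). *)

(* Defs.v *)
(* Abstract axiomatization of the part of the de Rham-Witt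
   complex W Omega_{k[X_1..X_n]/k} needed by the statement. *)
From HB Require Import structures.
From mathcomp Require Import all_boot all_order all_algebra.
Set Implicit Arguments. Unset Strict Implicit. Unset Printing Implicit Defensive.
Import Order.TTheory GRing.Theory Num.Theory.
Local Open Scope ring_scope.

Section DRW.
Variables (p n : nat) (A : pzRingType).
(* t i = [X_i] (Teichmueller of the variable X_i) *)
Variables (t : 'I_n -> A) (d : A -> A) (F : A -> A).

(* Identities satisfied by [.], d, F in W Omega_{k[X]/k} (graded commutative,
   [X_i] of degree 0, d a derivation, F a ring endomorphism). *)
Record dRW_axioms : Prop := {
  dRW_d_add : {morph d : x y / x + y};
  dRW_F_rmorph : {morph F : x y / x * y} /\ {morph F : x y / x + y} /\ F 1 = 1;
  dRW_t_central : forall i x, t i * x = x * t i;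
  dRW_d1 : d 1 = 0;
  dRW_d_leibniz_t : forall i x, d (t i * x) = d (t i) * x + t i * d x;
  dRW_dt_anticomm : forall i j, d (t i) * d (t j) = - (d (t j) * d (t i));
  dRW_dt_sq : forall i, d (t i) * d (t i) = 0;
  dRW_F_t : forall i, F (t i) = t i ^+ p;
  dRW_F_dt : forall i, F (d (t i)) = t i ^+ p.-1 * d (t i)
}.

Definition teichX (c : 'I_n -> nat) : A := \prod_(i < n) t i ^+ c i.

Definition supp (a : 'I_n -> nat) : {set 'I_n} := [set i | a i != 0%N].

Definition restrict (a : 'I_n -> nat) (K : {set 'I_n}) : 'I_n -> nat :=
  fun i => if i \in K then a i else 0%N.

(* val_p(a) = min_{i in Supp a} val_p(a_i) (arbitrary if Supp a is empty) *)
Definition valw (a : 'I_n -> nat) : nat :=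
  \big[minn/ \max_(i in supp a) logn p (a i)]_(i in supp a) logn p (a i).

Definition preceq (a : 'I_n -> nat) (i i' : 'I_n) : bool :=
  (logn p (a i) < logn p (a i'))%N ||
  ((logn p (a i) == logn p (a i')) && (i <= i')%N).
Definition prec (a : 'I_n -> nat) (i i' : 'I_n) : bool :=
  (logn p (a i) < logn p (a i'))%N ||
  ((logn p (a i) == logn p (a i')) && (i < i')%N).

Definition block0 (a : 'I_n -> nat) (J : {set 'I_n}) : {set 'I_n} :=
  [set i in supp a | [forall j in J, prec a i j]].

(* J_l for j = j_l: {i in Supp a : j_l \preceq i \prec j_{l+1}}
   (no upper bound when j = j_m) *)
Definition block (a : 'I_n -> nat) (J : {set 'I_n}) (j : 'I_n) : {set 'I_n} :=
  [set i in supp a | preceq a j i &&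
     [forall j' in J, prec a j j' ==> prec a i j']].

Definition sortedJ (a : 'I_n -> nat) (J : {set 'I_n}) : seq 'I_n :=
  sort (preceq a) (enum J).

Definition gfun (c : 'I_n -> nat) : A :=
  iter (valw c) F (d (teichX (fun i => c i %/ p ^ valw c)%N)).

Definition efun (s : int) (a : 'I_n -> nat) (J : {set 'I_n}) : A :=
  s%:~R * teichX (restrict a (block0 a J)) *
  \prod_(j <- sortedJ a J) gfun (restrict a (block a J j)).

Definition hfun (a : 'I_n -> nat) (I : {set 'I_n}) : A :=
  (\prod_(i in supp a :\: I) t i ^+ a i) *
  \prod_(j <- enum I)
     iter (logn p (a j)) F (d (t j ^+ (a j %/ p ^ logn p (a j))%N)).

Definition partsOfSize (a : 'I_n -> nat) (m : nat) : {set {set 'I_n}} :=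
  [set J : {set 'I_n} | (J \subset supp a) && (#|J| == m)].

End DRW.

(* Main.v *)
Require Import Defs.
From HB Require Import structures.
From mathcomp Require Import all_boot all_order all_algebra.
Import Order.TTheory GRing.Theory Num.Theory.
Local Open Scope ring_scope.
From mathcomp Require Import zify.
Set Implicit Arguments. Unset Strict Implicit.

Section Main.
Variables (p n : nat) (A : pzRingType) (t : 'I_n -> A) (d F : A -> A).
Hypothesis hax : dRW_axioms p t d F.

Definition central (x : A) := forall y, x * y = y * x.
Definition dt i := d (t i).
Definition dw (L : seq 'I_n) := \prod_(i <- L) dt i.
Local Notation tm := (teichX t).

Lemma dD : {morph d : x y / x + y}. Proof. exact: dRW_d_add hax. Qed.
Lemma d0 : d 0 = 0.
Proof. by apply: (addrI (d 0)); rewrite -dD !addr0. Qed.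
Lemma dMn x k : d (x *+ k) = d x *+ k.
Proof. elim: k => [|k IH]; first by rewrite !mulr0n d0. by rewrite !mulrS dD IH. Qed.

Lemma central1 : central 1. Proof. by move=> y; rewrite mul1r mulr1. Qed.
Lemma centralM x y : central x -> central y -> central (x * y).
Proof. by move=> hx hy z; rewrite -mulrA hy mulrA hx mulrA. Qed.
Lemma centralX x k : central x -> central (x ^+ k).
Proof. move=> hx; elim: k => [|k IH]; first exact: central1. by rewrite exprS; apply: centralM. Qed.
Lemma centralP I (r : seq I) (P : pred I) (f : I -> A) :
  (forall i, P i -> central (f i)) -> central (\prod_(i <- r | P i) f i).
Proof. move=> h; apply: big_ind => //; [exact: central1 | exact: centralM]. Qed.
Lemma central_t i : central (t i). Proof. move=> y; exact: (dRW_t_central hax i y). Qed.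
Lemma central_tm b : central (tm b).
Proof. apply: centralP => i _; apply: centralX; exact: central_t. Qed.

Lemma prod_mul_central I (r : seq I) (P : pred I) (x y : I -> A) :
  (forall i, central (x i)) ->
  \prod_(i <- r | P i) (x i * y i) = \prod_(i <- r | P i) x i * \prod_(i <- r | P i) y i.
Proof.
move=> hx; elim: r => [|i r IH]; first by rewrite !big_nil mulr1.
rewrite !big_cons; case: (P i) => //.
rewrite IH -!mulrA; congr (_ * _); rewrite !mulrA; congr (_ * _).
by rewrite (centralP _ (fun k _ => hx k)).
Qed.

Lemma tm_ext b c : (forall i, b i = c i) -> tm b = tm c.
Proof. by move=> h; apply: eq_bigr => i _; rewrite h. Qed.
Lemma tmD b c : tm (fun i => (b i + c i)%N) = tm b * tm c.
Proof.
rewrite /teichX -prod_mul_central; last by move=> i; apply: centralX; apply: central_t.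
by apply: eq_bigr => i _; rewrite exprD.
Qed.
Lemma tm0 : tm (fun _ => 0%N) = 1.
Proof. by rewrite /teichX big1. Qed.
Lemma tm_t i e : t i ^+ e = tm (fun k => if k == i then e else 0%N).
Proof.
rewrite /teichX (eq_bigr (fun k => if k == i then t k ^+ e else 1)); last first.
  by move=> k _; case: eqP.
by rewrite -big_mkcond big_pred1_eq.
Qed.

Lemma dtX i m y : d (t i ^+ m * y) = (t i ^+ m.-1 * dt i * y) *+ m + t i ^+ m * d y.
Proof.
elim: m => [|m IH]; first by rewrite !expr0 !mul1r add0r.
rewrite exprS -mulrA (dRW_d_leibniz_t hax) IH mulrDr mulrS -addrA; congr (_ + _).
  rewrite /dt mulrA; congr (_ * _).
  by rewrite (centralX m (central_t i)).
rewrite mulrnAr !mulrA; congr (_ + _).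
by case: m {IH} => [|m] /=; [rewrite !mulr0n | rewrite -exprS].
Qed.

Lemma dQ (r : seq 'I_n) b y : uniq r ->
  d (\prod_(i <- r) t i ^+ b i * y) =
  \sum_(i <- r) (\prod_(k <- r) t k ^+ (b k - (k == i))%N * dt i * y) *+ b i
  + \prod_(i <- r) t i ^+ b i * d y.
Proof.
elim: r y => [|j r IH] y /=; first by rewrite !big_nil !mul1r add0r.
move=> /andP [jr ur].
rewrite !big_cons -mulrA dtX IH // mulrDr addrA; congr (_ + _); last by rewrite mulrA.
rewrite mulr_sumr; congr (_ + _).
  rewrite eqxx subn1 -!mulrA; congr (_ *+ _); congr (_ * _).
  have -> : \prod_(k <- r) t k ^+ (b k - (k == j))%N = \prod_(k <- r) t k ^+ b k.
    apply: eq_big_seq => k kr.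
    have -> : (k == j) = false by apply/eqP => ekj; rewrite -ekj kr in jr.
    by rewrite subn0.
  rewrite !mulrA; congr (_ * _).
  by rewrite (centralP _ (fun i _ => centralX (b i) (central_t i))).
apply: eq_big_seq => i ir; rewrite big_cons.
have -> : (j == i) = false by apply/eqP => ej; rewrite ej ir in jr.
by rewrite subn0 mulrnAr !mulrA.
Qed.

Lemma dtm b : d (tm b) = \sum_(i < n) (tm (fun k => (b k - (k == i))%N) * dt i) *+ b i.
Proof.
have := dQ b 1 (index_enum_uniq 'I_n).
rewrite !mulr1 (dRW_d1 hax) mulr0 addr0 /teichX => ->.
by apply: eq_bigr => i _; rewrite mulr1.
Qed.


Definition rm (g : A -> A) :=
  [/\ {morph g : x y / x + y}, {morph g : x y / x * y} & g 1 = 1].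

Lemma rmF : rm F.
Proof. by case: (dRW_F_rmorph hax) => [h1 [h2 h3]]; split. Qed.

Lemma rm_iter v : rm (iter v F).
Proof.
elim: v => [|v [h1 h2 h3]]; first by split.
case: rmF => f1 f2 f3; split => [x y|x y|] /=; by rewrite ?h1 ?h2 ?h3 ?f1 ?f2 ?f3.
Qed.

Section RM.
Variable g : A -> A.
Hypothesis hg : rm g.
Lemma rmD : {morph g : x y / x + y}. Proof. by case: hg. Qed.
Lemma rmM : {morph g : x y / x * y}. Proof. by case: hg. Qed.
Lemma rm1 : g 1 = 1. Proof. by case: hg. Qed.
Lemma rm0 : g 0 = 0.
Proof. by apply: (addrI (g 0)); rewrite -rmD !addr0. Qed.
Lemma rmMn x k : g (x *+ k) = g x *+ k.
Proof. elim: k => [|k IH]; first by rewrite !mulr0n rm0. by rewrite !mulrS rmD IH. Qed.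
Lemma rmX x k : g (x ^+ k) = g x ^+ k.
Proof. elim: k => [|k IH]; first by rewrite !expr0 rm1. by rewrite !exprS rmM IH. Qed.
Lemma rm_sum I (r : seq I) (P : pred I) f :
  g (\sum_(i <- r | P i) f i) = \sum_(i <- r | P i) g (f i).
Proof. exact: (big_morph g rmD rm0). Qed.
Lemma rm_prod I (r : seq I) (P : pred I) f :
  g (\prod_(i <- r | P i) f i) = \prod_(i <- r | P i) g (f i).
Proof. exact: (big_morph g rmM rm1). Qed.
End RM.

Lemma Fv_t v i : iter v F (t i) = t i ^+ (p ^ v).
Proof.
elim: v => [|v IH]; first by rewrite expn0 expr1.
by rewrite iterS IH (rmX rmF) (dRW_F_t hax) -exprM expnS.
Qed.

Hypothesis hp : prime p.

Lemma Fv_dt v i : iter v F (dt i) = t i ^+ (p ^ v).-1 * dt i.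
Proof.
elim: v => [|v IH]; first by rewrite expn0 expr0 mul1r.
rewrite iterS IH (rmM rmF) (rmX rmF) (dRW_F_t hax) (dRW_F_dt hax) mulrA -exprM -exprD.
have p0 : (0 < p)%N by apply: prime_gt0.
have q0 : (0 < p ^ v)%N by rewrite expn_gt0 p0.
congr (t i ^+ _ * _); rewrite expnS; move: q0; set q := (p ^ v)%N => q0.
rewrite -!subn1 mulnBr muln1; nia.
Qed.

Lemma Fv_tm v b : iter v F (tm b) = tm (fun i => (b i * p ^ v)%N).
Proof.
rewrite /teichX (rm_prod (rm_iter v)); apply: eq_bigr => i _.
by rewrite (rmX (rm_iter v)) Fv_t -exprM mulnC.
Qed.

Lemma tm_tX b i e : tm b * t i ^+ e = tm (fun k => (b k + (if k == i then e else 0))%N).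
Proof. by rewrite tm_t tmD. Qed.

Lemma gfun_eq (c : 'I_n -> nat) v : (forall i, p ^ v %| c i)%N ->
  iter v F (d (tm (fun i => c i %/ p ^ v)%N)) =
  \sum_(i < n) (tm (fun k => (c k - (k == i))%N) * dt i) *+ (c i %/ p ^ v).
Proof.
move=> hdiv; rewrite dtm (rm_sum (rm_iter v)); apply: eq_bigr => i _.
rewrite (rmMn (rm_iter v)) (rmM (rm_iter v)) Fv_tm Fv_dt.
have p0 : (0 < p)%N by apply: prime_gt0.
have q0 : (0 < p ^ v)%N by rewrite expn_gt0 p0.
case ci : (c i %/ p ^ v)%N => [|m]; first by rewrite !mulr0n.
congr (_ *+ _); rewrite mulrA tm_tX; congr (_ * _); apply: tm_ext => k.
have := divnK (hdiv k); case: eqP => [->|_]; last by rewrite !subn0 addn0.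
rewrite ci => <-; rewrite -!subn1; nia.
Qed.

Lemma dt_move x s : exists z : int, dt x * dw s = (dw s * dt x) *~ z.
Proof.
elim: s => [|y s [z IH]]; first by exists 1; rewrite /dw big_nil mulr1 mul1r mulr1z.
exists (- z); rewrite /dw !big_cons -/(dw s) mulrA (dRW_dt_anticomm hax) mulNr.
by rewrite -mulrA -/(dt x) IH mulrzAr mulrNz mulrA.
Qed.

Lemma dw_perm L L' : perm_eq L L' -> exists z : int, dw L = dw L' *~ z.
Proof.
elim: L L' => [|x L1 IH] L' h.
  have := perm_size h => /esym /size0nil ->; by exists 1; rewrite mulr1z.
have xL : x \in L' by rewrite -(perm_mem h) mem_head.
case/splitPr: xL h => p1 p2 h.
have h1 : perm_eq L1 (p1 ++ p2).
  rewrite -(perm_cons x); apply: (perm_trans h).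
  by rewrite -cat1s perm_catCA /= perm_refl.
have [z hz] := IH _ h1; have [z' hz'] := dt_move x p1.
exists (z' * z); rewrite /dw big_cons -/(dw L1) hz /dw !big_cat !big_cons /= -/(dw p1) -/(dw p2).
rewrite mulrzAr mulrA -/(dt x) hz' mulrzAl mulrzA !mulrA.
by rewrite /dw.
Qed.

Lemma prod_coef I (r : seq I) (c : I -> nat) (X Y : I -> A) :
  (forall i, central (X i)) ->
  \prod_(i <- r) ((X i * Y i) *+ c i) =
  (\prod_(i <- r) X i * \prod_(i <- r) Y i) *+ (\prod_(i <- r) c i)%N.
Proof.
move=> hX; elim: r => [|i r IH]; first by rewrite !big_nil mulr1.
rewrite !big_cons IH mulrnAl mulrnAr -mulrnA mulnC; congr (_ *+ _).
rewrite -!mulrA; congr (_ * _); rewrite !mulrA; congr (_ * _).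
by rewrite (centralP _ (fun k _ => hX k)).
Qed.


Variable a : 'I_n -> nat.

Definition lg i := logn p (a i).
Definition key (i : 'I_n) := (lg i * n + i)%N.

Lemma key_inj : injective key.
Proof.
move=> i j; rewrite /key => h; apply: val_inj => /=.
have hi := ltn_ord i; have hj := ltn_ord j.
have := congr1 (modn^~ n) h; rewrite !modnMDl !modn_small //.
Qed.

Lemma key_le_lg i j : (key i <= key j)%N -> (lg i <= lg j)%N.
Proof.
rewrite /key => h; have hi := ltn_ord i; have hj := ltn_ord j.
rewrite leqNgt; apply/negP => hl; nia.
Qed.

Lemma preceqE i j : preceq p a i j = (key i <= key j)%N.
Proof.
rewrite /preceq /key -/(lg i) -/(lg j); have hi := ltn_ord i; have hj := ltn_ord j.
case: (ltngtP (lg i) (lg j)) => h /=.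
- by apply/esym/idP; nia.
- by apply/esym/negP => h'; nia.
- by rewrite h leq_add2l.
Qed.

Lemma precE i j : prec p a i j = (key i < key j)%N.
Proof.
rewrite /prec /key -/(lg i) -/(lg j); have hi := ltn_ord i; have hj := ltn_ord j.
case: (ltngtP (lg i) (lg j)) => h /=.
- by apply/esym/idP; nia.
- by apply/esym/negP => h'; nia.
- by rewrite h ltn_add2l.
Qed.

Section CombJ.
Variable J : {set 'I_n}.
Hypothesis hJ : J \subset supp a.

Local Notation B := (block p a J).
Local Notation B0 := (block0 p a J).

Lemma memB i j : (i \in B j) =
  [&& i \in supp a, (key j <= key i)%N & [forall j' in J, (key j < key j')%N ==> (key i < key j')%N]].
Proof.
rewrite /block inE preceqE; congr [&& _, _ & _].
by apply: eq_forallb => j'; rewrite !precE.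
Qed.

Lemma memB0 i : (i \in B0) = (i \in supp a) && [forall j in J, (key i < key j)%N].
Proof.
rewrite /block0 inE; congr (_ && _).
by apply: eq_forallb => j'; rewrite !precE.
Qed.

Lemma B_supp i j : i \in B j -> i \in supp a.
Proof. by rewrite memB => /and3P []. Qed.

Lemma B_key i j : i \in B j -> (key j <= key i)%N.
Proof. by rewrite memB => /and3P []. Qed.

Lemma jB j : j \in J -> j \in B j.
Proof.
move=> jJ; rewrite memB leqnn (subsetP hJ _ jJ) /=.
by apply/forall_inP => j' _; apply/implyP.
Qed.

Lemma B_disj i j j' : j \in J -> j' \in J -> i \in B j -> i \in B j' -> j = j'.
Proof.
move=> jJ j'J; rewrite !memB => /and3P [_ k1 /forall_inP f1] /and3P [_ k2 /forall_inP f2].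
apply: key_inj; case: (ltngtP (key j) (key j')) => // h.
- by have := implyP (f1 _ j'J) h; rewrite ltnNge k2.
- by have := implyP (f2 _ jJ) h; rewrite ltnNge k1.
Qed.

Lemma B0_notB i j : j \in J -> i \in B0 -> i \in B j -> False.
Proof.
move=> jJ; rewrite memB0 memB => /andP [_ /forall_inP f] /and3P [_ k _].
by have := f _ jJ; rewrite ltnNge k.
Qed.

Lemma cover i : i \in supp a -> (i \in B0) \/ exists2 j, j \in J & i \in B j.
Proof.
move=> iS.
case: (boolP [exists j in J, (key j <= key i)%N]) => [/exists_inP [j0 j0J k0]|h].
  right.
  pose j1 := [arg max_(j > j0 | (j \in J) && (key j <= key i)%N) key j].
  case: (@arg_maxnP _ j0 (fun j => (j \in J) && (key j <= key i)%N) key) => [|j1' /andP [j1J k1] hmax].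
    by rewrite j0J k0.
  exists j1' => //; rewrite memB iS k1 /=; apply/forall_inP => j' j'J; apply/implyP => hl.
  rewrite ltnNge; apply/negP => hle.
  have := hmax j' (introT andP (conj j'J hle)); simpl; lia.
left; rewrite memB0 iS /=; apply/forall_inP => j jJ.
rewrite ltnNge; apply/negP => hle; move/negP: h; apply; apply/exists_inP; by exists j.
Qed.


Local Notation r := (sortedJ p a J).

Lemma r_perm : perm_eq r (enum J).
Proof. by rewrite /sortedJ perm_sort perm_refl. Qed.
Lemma r_uniq : uniq r.
Proof. by rewrite (perm_uniq r_perm) enum_uniq. Qed.
Lemma r_mem x : (x \in r) = (x \in J).
Proof. by rewrite (perm_mem r_perm) mem_enum. Qed.
Lemma r_size : size r = #|J|.
Proof. by rewrite (perm_size r_perm) cardE. Qed.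

Lemma sum_ind (T : Type) (P : pred T) (s : seq T) : (\sum_(j <- s) (P j : nat))%N = count P s.
Proof. by elim: s => [|x s IH]; rewrite ?big_nil ?big_cons ?IH. Qed.

Lemma part_count i : i \in supp a -> ((i \in B0) + count (fun j => i \in B j) r)%N = 1%N.
Proof.
move=> iS; case: (cover iS) => [i0|[j jJ ij]].
  rewrite i0; have -> : count (fun j => i \in B j) r = 0%N; last by [].
  apply/eqP; rewrite -leqn0 leqNgt -has_count; apply/hasPn => j jr.
  by apply/negP => ij; apply: (B0_notB (j:=j)) i0 ij; rewrite -r_mem.
have -> : (i \in B0) = false by apply/negP => i0; exact: (B0_notB jJ i0 ij).
rewrite (@eq_in_count _ _ (pred1 j)); last first.
  move=> j' j'r /=; apply/idP/eqP => [ij'|->//].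
  by apply: (B_disj (i:=i)) => //; rewrite -r_mem.
by rewrite count_uniq_mem ?r_uniq // r_mem jJ.
Qed.

Lemma restrict_sum i :
  (restrict a B0 i + \sum_(j <- r) restrict a (B j) i)%N = a i.
Proof.
case: (boolP (i \in supp a)) => iS; last first.
  have a0 : a i = 0%N by move: iS; rewrite /supp inE negbK => /eqP.
  rewrite /restrict a0 big1; first by case: ifP.
  by move=> j _; case: ifP.
rewrite /restrict (eq_bigr (fun j => a i * (i \in B j))%N); last first.
  by move=> j _; case: ifP; rewrite ?muln1 ?muln0.
rewrite -big_distrr /= sum_ind.
have := part_count iS; case: (i \in B0) => /= h; last first.
  by rewrite add0n in h; rewrite h muln1.
by move: h; rewrite add1n => -[->]; rewrite muln0 addn0.

Qed.

Definition choices (Bf : 'I_n -> {set 'I_n}) (s : seq 'I_n) : seq (seq 'I_n) :=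
  foldr (fun j cs => [seq i :: L | i <- enum (Bf j), L <- cs]) [:: [::]] s.

Lemma choicesP (Bf : 'I_n -> {set 'I_n}) (s L : seq 'I_n) : L \in choices Bf s -> all2 (fun j i => i \in Bf j) s L.
Proof.
elim: s L => [|j s IH] L /=; first by rewrite mem_seq1 => /eqP ->.
case/allpairsPdep => i [L' [ij hL' ->]] /=.
by rewrite -(mem_enum (Bf j)) ij IH.
Qed.

Lemma choices_self (Bf : 'I_n -> {set 'I_n}) (s : seq 'I_n) : (forall j, j \in s -> j \in Bf j) -> s \in choices Bf s.
Proof.
elim: s => [|j s IH] h /=; first by rewrite mem_seq1.
apply/allpairsPdep; exists j, s; split => //.
  by rewrite mem_enum; apply: h; rewrite mem_head.
by apply: IH => k ks; apply: h; rewrite in_cons ks orbT.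
Qed.

Lemma choices_uniq (Bf : 'I_n -> {set 'I_n}) (s : seq 'I_n) : uniq (choices Bf s).
Proof.
elim: s => [|j s IH] //=.
apply: allpairs_uniq => //; first exact: enum_uniq.
by move=> [x y] [x' y'] _ _ /= [-> ->].
Qed.

Lemma all2_size (T1 T2 : Type) (P : T1 -> T2 -> bool) s L : all2 P s L -> size s = size L.
Proof. by elim: s L => [|x s IH] [|y L] //= /andP [_ /IH ->]. Qed.

Lemma all2_mem (T : eqType) (P : T -> T -> bool) s L i :
  all2 P s L -> i \in L -> exists2 j, j \in s & P j i.
Proof.
elim: s L => [|x s IH] [|y L] //= /andP [hxy h]; rewrite in_cons => /orP [/eqP ->|iL].
  by exists x; rewrite ?mem_head.
by have [j js hj] := IH _ h iL; exists j; rewrite ?in_cons ?js ?orbT.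
Qed.

Lemma all2_zip (T : eqType) (P : T -> T -> bool) s L x :
  all2 P s L -> x \in zip s L -> P x.1 x.2.
Proof.
elim: s L => [|y s IH] [|z L] //= /andP [hyz h]; rewrite in_cons => /orP [/eqP ->|xL] //.
exact: IH xL.
Qed.

Lemma choice_uniq s L : uniq s -> {subset s <= J} -> all2 (fun j i => i \in B j) s L -> uniq L.
Proof.
elim: s L => [|j s IH] [|i L] //= /andP [js us] sJ /andP [ij h].
rewrite (IH L us) ?andbT //; last by move=> k ks; apply: sJ; rewrite in_cons ks orbT.
apply/negP => iL; have [j' j's ij'] := all2_mem h iL.
have e : j = j' by apply: (B_disj (i:=i)) => //; apply: sJ; rewrite ?mem_head ?in_cons ?j's ?orbT.
by rewrite e j's in js.
Qed.

Lemma mu_le s L : all2 (fun j i => key j <= key i)%N s L ->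
  (\sum_(j <- s) key j <= \sum_(i <- L) key i)%N /\
  ((\sum_(j <- s) key j == \sum_(i <- L) key i)%N -> s = L).
Proof.
elim: s L => [|j s IH] [|i L] //= /andP [hji /IH [h1 h2]].
rewrite !big_cons; split; first by rewrite leq_add.
move=> /eqP he; have e1 : key j = key i by lia.
have e2 : (\sum_(j <- s) key j)%N = (\sum_(i <- L) key i)%N by lia.
by rewrite (key_inj e1) h2 // e2.
Qed.

End CombJ.

Local Notation B J := (block p a J).
Local Notation B0 J := (block0 p a J).

Definition mm i := (a i %/ p ^ lg i)%N.
Definition Om (L : seq 'I_n) : A :=
  (\prod_(i <- L) mm i)%N%:R * (tm (fun k => a k - count_mem k L)%N * dw L).

Lemma bigmin_le (I : eqType) (s : seq I) (P : pred I) (f : I -> nat) x0 j :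
  j \in s -> P j -> (\big[minn/x0]_(i <- s | P i) f i <= f j)%N.
Proof.
elim: s => [|i s IH] //; rewrite in_cons big_cons => /orP [/eqP <-|js] Pj.
  by rewrite Pj geq_minl.
case: (P i); last exact: IH.
by apply: leq_trans (geq_minr _ _) (IH js Pj).
Qed.

Lemma mem_supp_restrict (J : {set 'I_n}) i j : i \in B J j -> restrict a (B J j) i = a i.
Proof. by rewrite /restrict => ->. Qed.

Lemma valw_block (J : {set 'I_n}) (hJ : J \subset supp a) j : j \in J -> valw p (restrict a (B J j)) = lg j.
Proof.
move=> jJ.
have suppc i : (i \in supp (restrict a (B J j))) = (i \in B J j).
  rewrite {1}/supp inE /restrict; case: ifP => // iB.
  by have := B_supp iB; rewrite /supp inE.
have jc : j \in supp (restrict a (B J j)) by rewrite suppc jB.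
apply/eqP; rewrite eqn_leq; apply/andP; split.
  rewrite /valw; apply: leq_trans (bigmin_le _ _ (mem_index_enum j) jc) _.
  by rewrite mem_supp_restrict ?jB.
rewrite /valw; apply: (big_ind (fun x => lg j <= x)%N).
- have := @leq_bigmax_cond _ (fun i => i \in supp (restrict a (B J j)))
     (fun i => logn p (restrict a (B J j) i)) j jc.
  by rewrite mem_supp_restrict ?jB.
- by move=> x y hx hy; rewrite leq_min hx hy.
move=> i; rewrite suppc => iB; rewrite mem_supp_restrict //.
exact: key_le_lg (B_key iB).
Qed.

Definition G (J : {set 'I_n}) j i : A :=
  (tm (fun k => restrict a (B J j) k - (k == i))%N * dt i) *+ (a i %/ p ^ lg j).

Lemma gfun_B (J : {set 'I_n}) (hJ : J \subset supp a) j : j \in J ->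
  gfun p t d F (restrict a (B J j)) = \sum_(i <- enum (B J j)) G J j i.
Proof.
move=> jJ; rewrite /gfun valw_block // gfun_eq; last first.
  move=> i; rewrite /restrict; case: ifP => // iB.
  apply: dvdn_trans (pfactor_dvdnn p (a i)); apply: dvdn_exp2l.
  exact: key_le_lg (B_key iB).
rewrite big_enum /= [RHS]big_mkcond /=; apply: eq_bigr => i _; rewrite /G /restrict.
by case: ifP => //; rewrite div0n mulr0n.
Qed.


Lemma prod_sum (Bf : 'I_n -> {set 'I_n}) (H : 'I_n -> 'I_n -> A) (s : seq 'I_n) :
  \prod_(j <- s) \sum_(i <- enum (Bf j)) H j i =
  \sum_(L <- choices Bf s) \prod_(x <- zip s L) H x.1 x.2.
Proof.
elim: s => [|j s IH] /=; first by rewrite big_nil big_seq1 big_nil.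
rewrite big_cons IH mulr_suml big_allpairs_dep; apply: eq_bigr => i _.
rewrite mulr_sumr; apply: eq_bigr => L _ /=; by rewrite big_cons.
Qed.

Lemma tm_prod (I : Type) (s : seq I) (f : I -> 'I_n -> nat) :
  \prod_(x <- s) tm (f x) = tm (fun k => \sum_(x <- s) f x k)%N.
Proof.
elim: s => [|x s IH]; first by rewrite big_nil -tm0; apply: tm_ext => k; rewrite big_nil.
rewrite big_cons IH -tmD; apply: tm_ext => k; by rewrite big_cons.
Qed.

Lemma sumnB_le (I : eqType) (s : seq I) (u v : I -> nat) :
  (forall x, x \in s -> v x <= u x)%N ->
  (\sum_(x <- s) (u x - v x) = \sum_(x <- s) u x - \sum_(x <- s) v x)%N /\
  (\sum_(x <- s) v x <= \sum_(x <- s) u x)%N.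
Proof.
elim: s => [|x s IH] h; first by rewrite !big_nil.
have [IH1 IH2] : (\sum_(x <- s) (u x - v x) = \sum_(x <- s) u x - \sum_(x <- s) v x)%N /\
  (\sum_(x <- s) v x <= \sum_(x <- s) u x)%N.
  by apply: IH => y hy; apply: h; rewrite in_cons hy orbT.
have h1 := h x (mem_head x s).
rewrite !big_cons IH1; split; lia.
Qed.

Lemma zip_diag (T : Type) (s : seq T) x : List.In x (zip s s) -> x.1 = x.2.
Proof. elim: s => [|y s IH] //= [e|hx]; [by subst x | exact: IH]. Qed.

Lemma in_zip_all2 (T : eqType) (P : T -> T -> bool) s L x :
  all2 P s L -> List.In x (zip s L) -> P x.1 x.2.
Proof.
elim: s L => [|y s IH] [|z L] //= /andP [hyz h] [e|xL]; [by subst x | exact: IH xL].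
Qed.


Lemma supp_pos i : i \in supp a -> (0 < a i)%N.
Proof. by rewrite /supp inE lt0n. Qed.

Lemma exp_eq (J : {set 'I_n}) (hJ : J \subset supp a) L
  (hL : all2 (fun j i => i \in B J j) (sortedJ p a J) L) k :
  (restrict a (B0 J) k +
   \sum_(x <- zip (sortedJ p a J) L) (restrict a (B J x.1) k - (k == x.2)))%N
  = (a k - count_mem k L)%N.
Proof.
set r := sortedJ p a J.
have hs := all2_size hL.
have hs1 : (size r <= size L)%N by rewrite /r hs.
have hs2 : (size L <= size r)%N by rewrite /r hs.
have hv : forall x, x \in zip r L -> (((k == x.2) : nat) <= restrict a (B J x.1) k)%N.
  move=> x hx; have /= hB := all2_zip hL hx.
  case: eqP => [ek|] //=; rewrite ek mem_supp_restrict //.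
  exact: supp_pos (B_supp hB).
have [e1 e2] := sumnB_le hv.
rewrite e1.
have ez : (\sum_(x <- zip r L) restrict a (B J x.1) k = \sum_(j <- r) restrict a (B J j) k)%N.
  by rewrite -[in RHS](@unzip1_zip _ _ r L hs1) /unzip1 big_map.
have ec : (\sum_(x <- zip r L) ((k == x.2) : nat) = count_mem k L)%N.
  transitivity (\sum_(i <- unzip2 (zip r L)) ((k == i) : nat))%N; first by rewrite /unzip2 big_map.
  rewrite (@unzip2_zip _ _ r L hs2) sum_ind.
  by apply: eq_count => i /=; rewrite eq_sym.
rewrite ec ez in e2 *.
have hR := restrict_sum hJ k; rewrite -/r in hR.
lia.
Qed.

Lemma coef_eq (J : {set 'I_n}) L
  (hL : all2 (fun j i => i \in B J j) (sortedJ p a J) L) :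
  (\prod_(x <- zip (sortedJ p a J) L) (a x.2 %/ p ^ lg x.1))%N =
  (\prod_(i <- L) mm i * \prod_(x <- zip (sortedJ p a J) L) p ^ (lg x.2 - lg x.1))%N.
Proof.
set r := sortedJ p a J.
have hs := all2_size hL.
have hs1 : (size r <= size L)%N by rewrite /r hs.
have hs2 : (size L <= size r)%N by rewrite /r hs.
rewrite -[in X in (X * _)%N](@unzip2_zip _ _ r L hs2) /unzip2 big_map -big_split /=.
apply: eq_big_seq => x hx; have /= hB := all2_zip hL hx.
have hl := key_le_lg (B_key hB).
have p0 : (0 < p)%N by apply: prime_gt0.
rewrite /mm; have ha := divnK (pfactor_dvdnn p (a x.2)); rewrite -/(lg x.2) in ha.
have e : a x.2 = (a x.2 %/ p ^ lg x.2 * p ^ (lg x.2 - lg x.1) * p ^ lg x.1)%N.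
  by rewrite -mulnA -expnD subnK // ha.
by rewrite {1}e mulnK // expn_gt0 p0.
Qed.


Definition Nf (J : {set 'I_n}) L := (\prod_(x <- zip (sortedJ p a J) L) p ^ (lg x.2 - lg x.1))%N.

Lemma dw_zip (s L : seq 'I_n) : size s = size L -> \prod_(x <- zip s L) dt x.2 = dw L.
Proof.
move=> hs; transitivity (\prod_(i <- unzip2 (zip s L)) dt i); first by rewrite /unzip2 big_map.
by rewrite unzip2_zip // hs.
Qed.

Lemma term_eq (J : {set 'I_n}) (hJ : J \subset supp a) L
  (hL : all2 (fun j i => i \in B J j) (sortedJ p a J) L) :
  tm (restrict a (B0 J)) * \prod_(x <- zip (sortedJ p a J) L) G J x.1 x.2 = Om L *+ Nf J L.
Proof.
have hs := all2_size hL.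
rewrite /G (@prod_coef _ (zip (sortedJ p a J) L) (fun x => a x.2 %/ p ^ lg x.1)%N
  (fun x => tm (fun k => restrict a (B J x.1) k - (k == x.2))%N) (fun x => dt x.2)); last first.
  by move=> x; apply: central_tm.
rewrite tm_prod dw_zip // coef_eq // mulrnAr mulrA -tmD /Om mulr_natl -mulrnA.
congr (_ * _ *+ _); apply: tm_ext => k; exact: exp_eq.
Qed.

Lemma Nf_self (J : {set 'I_n}) : Nf J (sortedJ p a J) = 1%N.
Proof.
rewrite /Nf big1_seq // => x /andP [_ hx].
suff -> : x.1 = x.2 by rewrite subnn expn0.
elim: (sortedJ p a J) hx => [|y s IH] //=; rewrite in_cons => /orP [/eqP ->|] //.
Qed.


Lemma efun1_eq (J : {set 'I_n}) (hJ : J \subset supp a) :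
  efun p t d F 1 a J = \sum_(L <- choices (B J) (sortedJ p a J)) Om L *+ Nf J L.
Proof.
rewrite /efun mulrzl mulr1z.
rewrite (eq_big_seq (fun j => \sum_(i <- enum (B J j)) G J j i)); last first.
  by move=> j jr; apply: gfun_B => //; rewrite -r_mem.
rewrite prod_sum mulr_sumr; apply: eq_big_seq => L hL.
by apply: term_eq => //; apply: choicesP hL.
Qed.

Lemma efunE (s : int) J : efun p t d F s a J = efun p t d F 1 a J *~ s.
Proof. by rewrite /efun -!mulrA !mulrzl mulr1z. Qed.

Definition Spn m (x : A) := exists s : {set 'I_n} -> int,
  x = \sum_(J in partsOfSize a m) efun p t d F (s J) a J.

Lemma Spn0 m : Spn m 0.
Proof.
exists (fun _ => 0); rewrite big1 // => J _; by rewrite efunE mulr0z.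
Qed.

Lemma SpnD m x y : Spn m x -> Spn m y -> Spn m (x + y).
Proof.
move=> [s1 h1] [s2 h2]; exists (fun J => s1 J + s2 J); rewrite h1 h2 -big_split /=.
by apply: eq_bigr => J _; rewrite !(efunE (_ + _)) (efunE (s1 J)) (efunE (s2 J)) mulrzDr.
Qed.

Lemma SpnZ m x z : Spn m x -> Spn m (x *~ z).
Proof.
move=> [s h]; exists (fun J => s J * z); rewrite h.
rewrite (big_morph (fun x => x *~ z) (@mulrzDl A z) (@mul0rz A z)).
by apply: eq_bigr => J _; rewrite (efunE (s J * z)) (efunE (s J)) mulrzA.
Qed.

Lemma Spn_e1 m J : J \in partsOfSize a m -> Spn m (efun p t d F 1 a J).
Proof.
move=> JP; exists (fun J' => (J' == J)%:Z).
rewrite (bigD1 J) //= eqxx big1 ?addr0 // => J' /andP [_ /negbTE ->].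
by rewrite efunE mulr0z.
Qed.

Lemma all2_impl (T : Type) (P Q : T -> T -> bool) s L :
  (forall x y, P x y -> Q x y) -> all2 P s L -> all2 Q s L.
Proof.
move=> h; elim: s L => [|x s IH] [|y L] //= /andP [hxy hsL].
by rewrite h // IH.
Qed.

Lemma Om_perm L L' : perm_eq L L' -> exists z : int, Om L = Om L' *~ z.
Proof.
move=> hp'; have [z hz] := dw_perm hp'; exists z.
rewrite /Om hz (perm_big _ hp') mulrzAr mulrzAr; congr (_ * (_ * _) *~ _).
apply: tm_ext => k; by rewrite (permP hp').
Qed.

Definition mu (L : seq 'I_n) := (\sum_(i <- L) key i)%N.
Definition Kmax := (\max_(i : 'I_n) key i)%N.

Lemma mu_bound L : (mu L <= size L * Kmax)%N.
Proof.
rewrite /mu; elim: L => [|i L IH]; first by rewrite big_nil.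
rewrite big_cons /= mulSn leq_add //.
exact: (@leq_bigmax_cond _ xpredT key i).
Qed.

Lemma Om_span m N : forall L, uniq L -> {subset L <= supp a} -> size L = m ->
  (m * Kmax - mu L < N)%N -> Spn m (Om L).
Proof.
elim: N => [//|N IH] L uL sL zL hN.
set J := [set x in L].
have hJ : J \subset supp a by apply/subsetP => x; rewrite inE; apply: sL.
have cJ : #|J| = m by rewrite cardsE (card_uniqP uL).
have JP : J \in partsOfSize a m by rewrite /partsOfSize inE hJ cJ eqxx.
have pLr : perm_eq L (sortedJ p a J).
  by apply: uniq_perm => //; [exact: r_uniq | move=> x; rewrite r_mem inE].
have [z hz] := Om_perm pLr; rewrite hz; apply: SpnZ.
have he := efun1_eq hJ.
rewrite (bigD1_seq (sortedJ p a J)) /= in he; last exact: choices_uniq; last first.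
  by apply: choices_self => j jr; apply: jB => //; rewrite -r_mem.
rewrite Nf_self mulr1n in he.
have -> : Om (sortedJ p a J) = efun p t d F 1 a J -
   \sum_(L' <- choices (B J) (sortedJ p a J) | L' != sortedJ p a J) Om L' *+ Nf J L'.
  by rewrite he addrK.
apply: SpnD; first exact: Spn_e1.
rewrite -mulrN1z; apply: SpnZ.
rewrite big_seq_cond; apply: (big_ind (Spn m)); [exact: Spn0 | exact: SpnD |].
move=> L' /andP [hL' ne]; rewrite pmulrn; apply: SpnZ.
have hA := choicesP hL'.
have hs := all2_size hA.
have zL' : size L' = m by rewrite -hs r_size.
apply: IH.
- by apply: (choice_uniq (J:=J)) hA; [exact: r_uniq | move=> x; rewrite r_mem].
- by move=> i iL'; have [j _ ij] := all2_mem hA iL'; exact: B_supp ij.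
- exact: zL'.
have hk : all2 (fun j i => key j <= key i)%N (sortedJ p a J) L'.
  by apply: all2_impl hA => x y; apply: B_key.
have [h1 h2] := mu_le hJ hk.
have hlt : (mu (sortedJ p a J) < mu L')%N.
  rewrite ltn_neqAle h1 andbT; apply/negP => /h2 e; by rewrite e eqxx in ne.
have emu : mu L = mu (sortedJ p a J) by rewrite /mu (perm_big _ pLr).
have hb := mu_bound L'; rewrite zL' in hb.
rewrite emu in hN; lia.
Qed.


Lemma hfactor j : j \in supp a ->
  iter (logn p (a j)) F (d (t j ^+ (a j %/ p ^ logn p (a j))%N)) =
  (t j ^+ (a j - 1)%N * dt j) *+ mm j.
Proof.
move=> jS; rewrite -/(lg j) -/(mm j).
have := dtX j (mm j) 1; rewrite mulr1 (dRW_d1 hax) mulr0 addr0 mulr1 => ->.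
rewrite (rmMn (rm_iter _)) (rmM (rm_iter _)) (rmX (rm_iter _)) Fv_t Fv_dt mulrA -exprM -exprD.
congr (t j ^+ _ * _ *+ _).
have ha := divnK (pfactor_dvdnn p (a j)); rewrite -/(lg j) -/(mm j) in ha.
have a0 := supp_pos jS.
have p0 : (0 < p)%N by apply: prime_gt0.
have q0 : (0 < p ^ lg j)%N by rewrite expn_gt0 p0.
move: ha a0 q0; set q := (p ^ lg j)%N; set u := mm j => ha a0 q0.
rewrite -ha in a0 *; rewrite -!subn1.
have u0 : (0 < u)%N by move: a0; rewrite muln_gt0 => /andP [].
rewrite mulnBr muln1 (mulnC q u); nia.
Qed.

Lemma hfun_eq (I : {set 'I_n}) : I \subset supp a -> hfun p t d F a I = Om (enum I).
Proof.
move=> hI; rewrite /hfun.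
rewrite (eq_big_seq (fun j => (t j ^+ (a j - 1)%N * dt j) *+ mm j)); last first.
  by move=> j; rewrite mem_enum => jI; apply: hfactor; apply: (subsetP hI).
rewrite prod_coef; last by move=> j; apply: centralX; apply: central_t.
rewrite /Om mulr_natl mulrnAr mulrA; congr (_ * _ *+ _).
have -> : \prod_(i in supp a :\: I) t i ^+ a i =
    tm (fun k => if k \in supp a :\: I then a k else 0%N).
  by rewrite /teichX big_mkcond; apply: eq_bigr => k _; case: ifP.
have -> : \prod_(j <- enum I) t j ^+ (a j - 1)%N =
    tm (fun k => if k \in I then (a k - 1)%N else 0%N).
  rewrite -deprecated_filter_index_enum big_filter /teichX big_mkcond.
  apply: eq_bigr => k _; rewrite -[X in if X then _ else _]/(k \in I).
  by case: ifP.
rewrite -tmD; apply: tm_ext => k.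
rewrite count_uniq_mem ?enum_uniq // mem_enum in_setD.
case: (boolP (k \in I)) => kI /=.
  by rewrite subn1 add0n.
case: (boolP (k \in supp a)) => kS; first by rewrite addn0 subn0.
by move: kS; rewrite /supp inE negbK => /eqP ->.
Qed.

End Main.

Unset Implicit Arguments.
Set Strict Implicit.

Theorem mainTheorem18 (p : nat) (hp : prime p) (n : nat) (A : pzRingType)
  (t : 'I_n -> A) (d : A -> A) (F : A -> A)
  (hax : dRW_axioms p t d F)
  (a : 'I_n -> nat) (I : {set 'I_n}) (hI : I \subset supp a) :
  exists s : {set 'I_n} -> int,
    hfun p t d F a I =
    \sum_(J in partsOfSize a #|I|) efun p t d F (s J) a J.
Proof.
rewrite (hfun_eq hax hp hI).
apply: (Om_span hax hp (N := (#|I| * Kmax p a - mu p a (enum I)).+1)) => //.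
- exact: enum_uniq.
- by move=> i; rewrite mem_enum; apply: (subsetP hI).
- by rewrite -cardE.
Qed.
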